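(* Let $m\geq 2$ and $n\geq 3$ be integers and let $M$ be the adjacency matrix of the oriented Dutch windmill graph $D^m_n$, and let $I$ denote the identity matrix of order $m(n-1)+1$. Then: (1) $M^{2n-1}=mM^{n-1}$; (2) $M^{n-1}\neq 0$; (3) $M^{2n-2}\neq mM^{n-2}$; (4) $M^n\neq mI$; (5) $M^{n^2-1}=m^{n-1}M^{n-1}$.
   Context: For integers $m\geq 1$, $n\geq 3$, the oriented Dutch windmill graph $D^m_n$ is the directed graph with vertex set $V=\{1,2,\ldots,m(n-1)+1\}$ whose directed edges $(a,b)$ are exactly: $(1,(k-1)(n-1)+2)$ for $k\in\{1,\ldots,m\}$; $((k-1)(n-1)+i,(k-1)(n-1)+i+1)$ for $k\in\{1,\ldots,m\}$ and $i\in\{2,\ldots,n-1\}$; and $((k-1)(n-1)+n,1)$ for $k\in\{1,\ldots,m\}$. Its adjacency matrix $M=(a_{ij})$ is the real square matrix with $a_{ij}=1$ if $(i,j)$ is an edge and $a_{ij}=0$ otherwise. *)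

(* Defs.v *)
From mathcomp Require Import all_boot all_order all_algebra.
From mathcomp Require Import reals.
Set Implicit Arguments. Unset Strict Implicit. Unset Printing Implicit Defensive.
Import Order.TTheory GRing.Theory Num.Theory.

(* Directed edge relation of the oriented Dutch windmill D^m_n on vertices
   1 .. m(n-1)+1 (1-based, as in the paper).  The paper's k in {1..m} is
   represented by k' = k-1 : 'I_m. *)
Definition dw_edge (m n a b : nat) : bool :=
  [exists k : 'I_m,
     [|| (a == 1) && (b == k * (n - 1) + 2),
         [exists i : 'I_n, (2 <= i <= n - 1) && (a == k * (n - 1) + i) && (b == a + 1)]
       | (a == k * (n - 1) + n) && (b == 1)]].

Definition dw_size (m n : nat) : nat := (m * (n - 1)).+1.

(* Adjacency matrix; row/column index i : 'I_N stands for vertex i+1. *)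
Definition dw_adj (R : realType) (m n : nat) : 'M[R]_(dw_size m n) :=
  \matrix_(i, j) ((dw_edge m n i.+1 j.+1)%:R)%R.

(* Main.v *)
Require Import Defs.
From mathcomp Require Import all_boot all_order all_algebra.
From mathcomp Require Import reals zify.
Import Order.TTheory GRing.Theory Num.Theory.
Local Open Scope ring_scope.

Lemma uniq_kj (k k' p j j' : nat) : (1 <= j <= p)%N -> (1 <= j' <= p)%N ->
  (k * p + j = k' * p + j')%N -> k = k' /\ j = j'.
Proof.
move=> h1 h2 h3.
have [lt|lt|eq] := ltngtP k k'.
- have : (k.+1 * p <= k' * p)%N by rewrite leq_mul2r lt orbT.
  rewrite mulSn; lia.
- have : (k'.+1 * p <= k * p)%N by rewrite leq_mul2r lt orbT.
  rewrite mulSn; lia.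
- subst; lia.
Qed.

Section W.
Variables (R : realType) (m p : nat).
Hypotheses (hm : (2 <= m)%N) (hp : (2 <= p)%N).
Let N1 := (m * (p.+1 - 1))%N.
Lemma N1E : N1 = (m * p)%N. Proof. by rewrite /N1 subn1. Qed.
Let M := dw_adj R m p.+1.
Definition e (x : nat) : 'rV[R]_(dw_size m p.+1) := delta_mx 0 (@inord N1 x).

Lemma edgeE a b : dw_edge m p.+1 a.+1 b.+1 = [exists k : 'I_m, [|| (a == 0) && (b == k * p+1),
   ((k * p+1 <= a < k * p+p) && (b == a+1)) | (a == k * p+p) && (b == 0)]]%N.
Proof.
apply: eq_existsb => k.
rewrite subn1 /=.
congr [|| _, _ | _]; first by apply/idP/idP; lia.
  apply/existsP/idP.
    case=> i /andP[/andP[] ]; lia.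
  move=> h; have hi : (a.+1 - k * p < p.+1)%N by lia.
  exists (Ordinal hi) => /=; lia.
apply/idP/idP; lia.
Qed.
Lemma kp_le k j : (k < m)%N -> (j <= p)%N -> (k * p + j <= m * p)%N.
Proof. move=> hk hj; have : (k.+1 * p <= m * p)%N by rewrite leq_mul2r hk orbT.
rewrite mulSn; lia. Qed.

Lemma eE x b : (x <= m * p)%N -> e x 0 b = (b == x :> nat)%:R.
Proof. move=> hx; have hx' : (x < N1.+1)%N by rewrite N1E ltnS.
by rewrite /e mxE /= -val_eqE /= inordK // eq_sym. Qed.

Lemma ME a b : (a <= m * p)%N -> (e a *m M) 0 b = (dw_edge m p.+1 a.+1 b.+1)%:R.
Proof. move=> ha; have ha' : (a < N1.+1)%N by rewrite N1E ltnS.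
by rewrite /e -rowE !mxE inordK. Qed.

Lemma L_hub : e 0 *m M = \sum_(k < m) e (k * p + 1).
Proof.
apply/rowP => b; rewrite ME // summxE edgeE.
have -> : [exists k : 'I_m, [|| (0 == 0) && ((b:nat) == k * p + 1),
   ((k * p + 1 <= 0 < k * p + p) && ((b:nat) == 0 + 1)) | (0 == k * p + p) && ((b:nat) == 0)]]%N
  = [exists k : 'I_m, (b : nat) == k * p + 1]%N.
  by apply: eq_existsb => k; apply/idP/idP; lia.
rewrite (eq_bigr (fun k : 'I_m => ((b:nat) == k * p + 1)%N%:R)) => [|k _]; last first.
  by rewrite eE ?kp_le //; lia.
case: (@existsP _ (fun k : 'I_m => (b:nat) == k * p + 1)%N) => [[k0 hk0]|hn].
  rewrite (bigD1 k0) //= hk0 big1 ?addr0 // => k hk.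
  apply/eqP; rewrite pnatr_eq0 eqb0; apply/negP => /eqP hb.
  have [] := uniq_kj k k0 p 1 1 _ _ _; try lia.
  by move=> /val_inj hh; rewrite hh eqxx in hk.
rewrite big1 // => k _; case: eqP => // hb; case: hn; exists k; exact/eqP.
Qed.

Lemma L_mid k j : (k < m)%N -> (1 <= j < p)%N -> e (k * p + j) *m M = e (k * p + j + 1).
Proof.
move=> hk hj; apply/rowP => b.
have h1 : (k * p + j <= m * p)%N by apply: kp_le; lia.
have h2 : (k * p + j + 1 <= m * p)%N by rewrite -addnA kp_le //; lia.
rewrite ME // eE //.
congr (_ %:R); congr nat_of_bool; rewrite edgeE; apply/existsP/idP.
  case=> k' /orP[|/orP[]]; try lia.
  move=> /andP[/eqP h _]; have [] := uniq_kj k k' p j p _ _ h; lia.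
move=> hb; exists (Ordinal hk); apply/orP; right; apply/orP; left; rewrite /=; lia.
Qed.

Lemma L_last k : (k < m)%N -> e (k * p + p) *m M = e 0.
Proof.
move=> hk; apply/rowP => b; rewrite ME ?kp_le // eE //.
congr (_ %:R); congr nat_of_bool; rewrite edgeE; apply/existsP/idP.
  case=> k' /orP[|/orP[]]; try lia.
  move=> /andP[/andP[h1 h2] _].
  have [] := uniq_kj k k' p p (k * p + p - k' * p) _ _ _; lia.
move=> hb; exists (Ordinal hk); apply/orP; right; apply/orP; right; rewrite /=; lia.
Qed.
Definition f s := \sum_(k < m) e (k * p + s).
Definition u s := e 0 *m M ^+ s.

Lemma fE s b : (1 <= s <= p)%N -> f s 0 b = [exists k : 'I_m, (b:nat) == k * p + s]%N%:R.
Proof.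
move=> hs; rewrite /f summxE.
rewrite (eq_bigr (fun k : 'I_m => ((b:nat) == k * p + s)%N%:R)) => [|k _]; last first.
  by rewrite eE ?kp_le //; lia.
case: (@existsP _ (fun k : 'I_m => (b:nat) == k * p + s)%N) => [[k0 hk0]|hn].
  rewrite (bigD1 k0) //= hk0 big1 ?addr0 // => k hk.
  apply/eqP; rewrite pnatr_eq0 eqb0; apply/negP => /eqP hb.
  have [] := uniq_kj k k0 p s s _ _ _; try lia.
  by move=> /val_inj hh; rewrite hh eqxx in hk.
rewrite big1 // => k _; case: eqP => // hb; case: hn; exists k; exact/eqP.
Qed.

Lemma L_f s : (1 <= s < p)%N -> f s *m M = f (s + 1).
Proof.
move=> hs; rewrite /f mulmx_suml; apply: eq_bigr => k _.
by rewrite L_mid // addnA.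
Qed.

Lemma L_fp : f p *m M = m%:R *: e 0.
Proof.
rewrite /f mulmx_suml (eq_bigr (fun _ => e 0)) => [|k _]; last by rewrite L_last.
by rewrite sumr_const card_ord scaler_nat.
Qed.

Lemma u_f s : (1 <= s <= p)%N -> u s = f s.
Proof.
elim: s => [//|s IH] hs.
case: s IH hs => [|s] IH hs.
  by rewrite /u expr1 L_hub.
rewrite /u exprSr -mulmxE mulmxA.
have -> : e 0 *m M ^+ s.+1 = u s.+1 by [].
rewrite IH; last lia.
by rewrite L_f ?addn1 //; lia.
Qed.

Lemma u_n : u p.+1 = m%:R *: e 0.
Proof.
by rewrite /u exprSr -mulmxE mulmxA -/(u p) u_f ?L_fp //; lia.
Qed.

Lemma u_q q t : u (q * p.+1 + t) = (m ^ q)%:R *: u t.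
Proof.
elim: q => [|q IH]; first by rewrite mul0n add0n expn0 scale1r.
rewrite mulSn -addnA /u exprD -mulmxE mulmxA -/(u p.+1) u_n -scalemxAl.
by rewrite -/(u _) IH scalerA -natrM expnS.
Qed.

Lemma petal k j t : (k < m)%N -> (1 <= j)%N -> (j + t <= p)%N ->
  e (k * p + j) *m M ^+ t = e (k * p + j + t).
Proof.
move=> hk hj; elim: t => [|t IH] ht; first by rewrite expr0 mulmx1 addn0.
rewrite exprSr -mulmxE mulmxA IH; last lia.
rewrite -addnA L_mid //; [congr e; lia | lia].
Qed.

Lemma row_pow k j t : (k < m)%N -> (1 <= j <= p)%N -> (p - j + 1 <= t)%N ->
  e (k * p + j) *m M ^+ t = u (t - (p - j + 1)).
Proof.
move=> hk hj ht; have hj1 : (0 < j)%N by lia.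
have E : t = ((p - j) + 1 + (t - (p - j + 1)))%N by lia.
rewrite {1}E exprD -mulmxE mulmxA exprD mulmxA petal //; last lia.
have -> : (k * p + j + (p - j) = k * p + p)%N by lia.
by rewrite expr1 L_last.
Qed.

Lemma rows_eq (A B : 'M[R]_(dw_size m p.+1)) :
  (forall x, (x <= m * p)%N -> e x *m A = e x *m B) -> A = B.
Proof.
move=> H; apply/row_matrixP => i; rewrite !rowE.
have hi : (i <= m * p)%N by have : (i < N1.+1)%N := ltn_ord i; rewrite N1E ltnS.
have := H i hi; by rewrite /e inord_val.
Qed.

Lemma decomp x : (x <= m * p)%N -> x = 0%N \/
   exists k j, [/\ (k < m)%N, (1 <= j <= p)%N & x = k * p + j]%N.
Proof.
case: x => [|x] hx; [by left|right].
exists (x %/ p)%N, (x %% p)%N.+1; split.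
- rewrite ltn_divLR; lia.
- have := ltn_pmod x (ltnW hp); lia.
- by rewrite addnS -divn_eq.
Qed.

Lemma powq q t : (p <= t)%N -> M ^+ (q * p.+1 + t) = (m ^ q)%:R *: M ^+ t.
Proof.
move=> ht; apply: rows_eq => x /decomp [->|[k [j [hk hj ->]]]].
  by rewrite -scalemxAr; exact: u_q.
rewrite -scalemxAr !row_pow //; try lia.
by rewrite -u_q; congr u; lia.
Qed.
Lemma eI x y : (x <= m * p)%N -> (y <= m * p)%N ->
  e x 0 (@inord N1 y) = (y == x)%N%:R.
Proof. move=> hx hy; have hy' : (y < N1.+1)%N by rewrite N1E ltnS.
by rewrite eE // inordK. Qed.

Lemma fI s y : (1 <= s <= p)%N -> (y <= m * p)%N ->
  f s 0 (@inord N1 y) = [exists k : 'I_m, y == k * p + s]%N%:R.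
Proof. move=> hs hy; have hy' : (y < N1.+1)%N by rewrite N1E ltnS.
by rewrite fE // inordK. Qed.

Lemma e1 : e 1 = e (0 * p + 1). Proof. by rewrite mul0n. Qed.

Lemma part2 : M ^+ p != 0.
Proof.
apply/negP => /eqP H; have := congr1 (mulmx (e 1)) H.
rewrite mulmx0 e1 row_pow //; try lia.
have -> : (p - (p - 1 + 1) = 0)%N by lia.
rewrite /u expr0 mulmx1 => /rowP /(_ (@inord N1 0)).
by rewrite eI ?mxE //; move/eqP; rewrite oner_eq0.
Qed.

Lemma part3 : M ^+ (p + p) != m%:R *: M ^+ (p - 1).
Proof.
apply/negP => /eqP H; have := congr1 (mulmx (e 1)) H.
rewrite -scalemxAr e1 row_pow //; try lia.
rewrite petal //; try lia.
have -> : (p + p - (p - 1 + 1) = p)%N by lia.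
rewrite /u -/(u p) u_f; last lia.
have hb : (1 * p + p <= m * p)%N by apply: kp_le.
move=> /rowP /(_ (@inord N1 (1 * p + p))).
rewrite fI //; try lia.
rewrite mxE eI //; last lia.
have -> : [exists k : 'I_m, (1 * p + p == k * p + p)]%N.
  by apply/existsP; exists (Ordinal hm).
have -> : (1 * p + p == 0 * p + 1 + (p - 1))%N = false by lia.
by rewrite mulr0 => /eqP; rewrite oner_eq0.
Qed.

Lemma part4 : M ^+ p.+1 != m%:R *: 1%:M.
Proof.
apply/negP => /eqP H; have := congr1 (mulmx (e 1)) H.
rewrite -scalemxAr mulmx1 e1 row_pow //; try lia.
have -> : (p.+1 - (p - 1 + 1) = 1)%N by lia.
rewrite /u -/(u 1) u_f; last lia.
have hb : (1 * p + 1 <= m * p)%N by apply: kp_le; lia.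
move=> /rowP /(_ (@inord N1 (1 * p + 1))).
rewrite fI //; try lia.
rewrite mxE eI //; last lia.
have -> : [exists k : 'I_m, (1 * p + 1 == k * p + 1)]%N.
  by apply/existsP; exists (Ordinal hm).
have -> : (1 * p + 1 == 0 * p + 1)%N = false by lia.
by rewrite mulr0 => /eqP; rewrite oner_eq0.
Qed.
End W.

Theorem theorem3p1 (R : realType) (m n : nat) (hm : (2 <= m)%N) (hn : (3 <= n)%N) :
  let M := dw_adj R m n in
  [/\ M ^+ (2 * n - 1) = m%:R *: M ^+ (n - 1),
      M ^+ (n - 1) != 0,
      M ^+ (2 * n - 2) != m%:R *: M ^+ (n - 2),
      M ^+ n != m%:R *: 1%:M
    & M ^+ (n ^ 2 - 1) = (m ^ (n - 1))%:R *: M ^+ (n - 1)].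
Proof.
move: hn; case: n => [|p] // hn /=.
have hp : (2 <= p)%N by lia.
have -> : (p.+1 - 1 = p)%N by lia.
have -> : (2 * p.+1 - 1 = 1 * p.+1 + p)%N by lia.
have -> : (2 * p.+1 - 2 = p + p)%N by lia.
have -> : (p.+1 - 2 = p - 1)%N by lia.
have -> : (p.+1 ^ 2 - 1 = p * p.+1 + p)%N by rewrite expnS expn1; lia.
split.
- by rewrite powq // expn1.
- exact: part2.
- exact: part3.
- exact: part4.
- by rewrite powq.
Qed.
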